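(* Let $A, B, C \in \mathbb{Z}$ with $A > 0$, $C > 0$, $B < 0$, $2A + B > 0$ and $A + B + C > 0$, suppose the polynomial $Ax^2 + Bx + C$ is irreducible, and let $\beta$ be a real root of it. Then there exists $\alpha \in \mathbb{R}$ with $p_\beta(\alpha) = \infty$.
   Context: For $\beta, \alpha \in \mathbb{C}$, $p_\beta(\alpha) \in \mathbb{Z}_{\geq 0}\cup\{\infty\}$ is the number of polynomials $f \in \mathbb{Z}_{\geq 0}[x]$ (non-negative integer coefficients) with $f(\beta) = \alpha$. *)

(* Defs.v *)
From HB Require Import structures.
From mathcomp Require Import all_boot all_order all_algebra.
From mathcomp Require Import boolp classical_sets cardinality reals.
Set Implicit Arguments. Unset Strict Implicit. Unset Printing Implicit Defensive.
Import Order.TTheory GRing.Theory Num.Theory.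
Local Open Scope ring_scope.
Local Open Scope classical_set_scope.

Definition evalN {R : nzRingType} (f : {poly nat}) (beta : R) : R :=
  (map_poly (fun n : nat => n%:R) f).[beta].

(* The set of polynomials f with non-negative integer coefficients such that
   f(beta) = alpha; p_beta(alpha) is its cardinality. *)
Definition Pset {R : nzRingType} (beta alpha : R) : set {poly nat} :=
  [set f | evalN f beta = alpha].

Definition p_infinite {R : nzRingType} (beta alpha : R) : Prop :=
  infinite_set (Pset beta alpha).

Definition quadQ (A B C : int) : {poly rat} :=
  A%:~R *: 'X^2 + B%:~R *: 'X + (C%:~R)%:P.

(* Main.v *)
Require Import Defs.
From HB Require Import structures.
From mathcomp Require Import all_boot all_order all_algebra.
From mathcomp Require Import boolp classical_sets cardinality reals.
From mathcomp Require Import zify ring lra.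
Import Order.TTheory GRing.Theory Num.Theory.
Local Open Scope ring_scope.

Lemma evalN_C (R : realType) (v : nat) (x : R) : evalN v%:P x = v%:R.
Proof.
rewrite /evalN.
by rewrite (map_polyC (GRing.natmul 1 : {rmorphism nat -> R})) hornerC.
Qed.

Lemma evalN_step (R : realType) (v : nat) (f : {poly nat}) (x : R) :
  evalN (v%:P + 'X * f) x = v%:R + x * evalN f x.
Proof.
rewrite /evalN.
change (((map_poly (GRing.natmul 1 : {rmorphism nat -> R}) (v%:P + 'X * f)).[x])
  = v%:R + x * (map_poly (GRing.natmul 1 : {rmorphism nat -> R}) f).[x]).
by rewrite rmorphD rmorphM /= map_polyX map_polyC hornerD hornerM hornerX hornerC mulrC.
Qed.

Fixpoint Rp (A a s : nat) (m : nat) : {poly nat} :=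
  match m with 0 => A%:P | m'.+1 => (a + s * m')%N%:P + 'X * Rp A a s m' end.

Fixpoint fs (v : nat) (W : {poly nat}) (n : nat) : {poly nat} :=
  match n with 0 => W | n'.+1 => v%:P + 'X * fs v W n' end.

Theorem lemma6 (R : realType) (A B C : int) (beta : R) :
  0 < A -> 0 < C -> B < 0 -> 0 < 2 * A + B -> 0 < A + B + C ->
  irreducible_poly (quadQ A B C) ->
  A%:~R * beta ^+ 2 + B%:~R * beta + C%:~R = 0 ->
  exists alpha : R, p_infinite beta alpha.
Proof.
case: A => [nA|nA] //; case: C => [nC|nC] //; case: B => [nb|nb] // => hA hC _ h2 h3 _.
set b := nb.+1.
have e2 : (b < 2 * nA)%N.
  move: h2; rewrite /b NegzE; lia.
have e3 : (b < nA + nC)%N.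
  move: h3; rewrite /b NegzE; lia.
rewrite NegzE -/b => hq.
set s := (nA + nC - b)%N.
set a := (2 * nA - b)%N.
set c := (nA + s * b - b)%N.
set v := (b.+1 * s)%N.
have spos : (0 < s)%N by rewrite /s; lia.
have cge : (b <= nA + s * b)%N by nia.
have hq' : nA%:R * beta ^+ 2 - b%:R * beta + nC%:R = 0 :> R.
  by rewrite -hq mulNr.
have rs : s%:R = nA%:R + nC%:R - b%:R :> R.
  by rewrite /s natrB ?natrD //; lia.
have ra : a%:R = 2 * nA%:R - b%:R :> R.
  by rewrite /a natrB ?natrM //; lia.
have key : (1 - beta) * (beta * nA%:R + nA%:R - b%:R) = s%:R.
  rewrite rs; apply/eqP; rewrite -subr_eq0; apply/eqP.
  by rewrite -[RHS](oppr0) -hq'; ring.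
have inv : forall m, (1 - beta) * beta * evalN (Rp nA a s m) beta
    = m.+1%:R * s%:R - (1 - beta) * (nA%:R - b%:R + s%:R * m%:R).
  elim=> [|m IH] /=.
  - rewrite evalN_C mulr0 addr0; rewrite -key; ring.
  - rewrite evalN_step natrD natrM ra.
    have -> : (1 - beta) * beta * (2 * nA%:R - b%:R + s%:R * m%:R + beta * evalN (Rp nA a s m) beta)
      = (1 - beta) * beta * (2 * nA%:R - b%:R + s%:R * m%:R) + beta * ((1 - beta) * beta * evalN (Rp nA a s m) beta) by ring.
    rewrite IH (mulrSr 1 m.+1).
    have : (1 - beta) * (beta * nA%:R + nA%:R - b%:R) = s%:R := key.
    move=> k; rewrite -k; ring.
set W := c%:P + 'X * Rp nA a s b.
set om := evalN W beta.
have hom : om - beta * om = v%:R.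
  rewrite /om /W evalN_step /c natrB // natrD natrM.
  rewrite /v natrM.
  set r := evalN (Rp nA a s b) beta.
  have -> : nA%:R + s%:R * b%:R - b%:R + beta * r - beta * (nA%:R + s%:R * b%:R - b%:R + beta * r)
    = (1 - beta) * (nA%:R - b%:R + s%:R * b%:R) + (1 - beta) * beta * r by ring.
  by rewrite inv; ring.
have fv : forall n, evalN (fs v W n) beta = om.
  elim=> [|n IH] //=; rewrite evalN_step IH -hom; ring.
have f1 : forall n, evalN (fs v W n) (1 : R) = n%:R * v%:R + evalN W 1.
  elim=> [|n IH] /=; first by rewrite mul0r add0r.
  by rewrite evalN_step IH mul1r -natr1; ring.
have vpos : (0 : R) < v%:R by rewrite ltr0n /v muln_gt0.
have injf : injective (fs v W).
  move=> n1 n2 /(congr1 (fun f => evalN f (1 : R))); rewrite !f1 => /addIr /mulIf.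
  by move=> /(_ (lt0r_neq0 vpos)) /eqP; rewrite eqr_nat => /eqP.
exists om; rewrite /p_infinite.
apply: (sub_infinite_set (A := (fs v W) @` setT)).
  by move=> f [n _ <-]; rewrite /Pset /=; apply: fv.
rewrite (eq_finite_set (inj_card_eq (in2W injf))).
exact: infinite_nat.
Qed.
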